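(* Let $X$ be a cubic vertex-transitive graph for which $1$ is a simple eigenvalue, and let $\mathbf{z}$ be an eigenvector for the eigenvalue $1$ all of whose entries lie in $\{1,-1\}$. Let $V^+=\{x\in V(X)\mid \mathbf{z}(x)=1\}$, $V^-=\{x\in V(X)\mid \mathbf{z}(x)=-1\}$, and let $M$ be the set of edges of $X$ with one end in $V^+$ and the other in $V^-$. Then: (i) the induced subgraph $X[V^+]$ is a disjoint union of cycles all of the same length; (ii) $X[V^+]$ is isomorphic to $X[V^-]$, and $V^+$ and $V^-$ are blocks of imprimitivity of the action of $\mathrm{Aut}(X)$ on $V(X)$; (iii) $\{V^+,V^-\}$ is the unique partition of $V(X)$ into two parts such that both parts induce $2$-regular subgraphs of $X$; (iv) $M$ is a perfect matching of $X$; (v) $\mathrm{Aut}(X)$ fixes $M$ set-wise and acts transitively on the arcs of $M$ (ordered pairs $(x,y)$ with $xy\in M$).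
   Context: Eigenvalues are those of the adjacency matrix; an eigenvalue is simple if its eigenspace is $1$-dimensional. (For a vertex-transitive graph with a simple eigenvalue, an eigenvector with all entries $\pm1$ exists after scaling.) $X[W]$ denotes the subgraph induced by $W\subseteq V(X)$. *)

(* Defs.v *)
From mathcomp Require Import all_boot all_order all_fingroup all_algebra.
Set Implicit Arguments. Unset Strict Implicit. Unset Printing Implicit Defensive.
Import Order.TTheory GRing.Theory Num.Theory.

Section Graphs.
Variable n : nat.
Implicit Types (e : rel 'I_n) (W : {set 'I_n}).

Definition simple_graph e := symmetric e /\ irreflexive e.

Definition cubic e := forall x : 'I_n, #|[set y | e x y]| = 3.

Definition is_aut e (s : {perm 'I_n}) := forall x y, e (s x) (s y) = e x y.

Definition vertex_transitive e :=
  forall x y : 'I_n, exists s, is_aut e s /\ s x = y.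

Definition adjmx (R : nzRingType) e : 'M[R]_n := \matrix_(i, j) (e i j)%:R%R.

Definition induced_rel e W : rel 'I_n :=
  fun x y => [&& x \in W, y \in W & e x y].

Definition two_regular_in e W :=
  forall x, x \in W -> #|[set y in W | e x y]| = 2.

(* X[W] is a disjoint union of cycles, all of length k: the connected
   component (in X[W]) of each vertex of W is the vertex set of a cycle c
   (a duplicate-free cyclic sequence of k >= 3 vertices) and the edges of X
   inside this component are exactly the edges of the cycle c. *)
Definition union_of_cycles_of_length e W (k : nat) :=
  3 <= k /\
  forall x, x \in W -> exists c : seq 'I_n,
    [/\ uniq c, size c = k,
        (forall y, (y \in c) = connect (induced_rel e W) x y) &
        {in c &, forall y z, e y z = (z == next c y) || (y == next c z)}].

Definition union_of_equal_cycles e W :=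
  exists k, union_of_cycles_of_length e W k.

Definition induced_iso e (A B : {set 'I_n}) :=
  exists f : 'I_n -> 'I_n,
    [/\ {in A &, injective f}, f @: A = B &
        {in A &, forall x y, e (f x) (f y) = e x y}].

Definition aut_block e (B : {set 'I_n}) :=
  forall s, is_aut e s -> s @: B = B \/ [disjoint s @: B & B].

Definition perfect_matching e (M : {set {set 'I_n}}) :=
  (forall m, m \in M -> exists x y, m = [set x; y] /\ e x y) /\
  (forall x : 'I_n, #|[set m in M | x \in m]| = 1).

Definition aut_fixes_edgeset e (M : {set {set 'I_n}}) :=
  forall s, is_aut e s -> [set s @: m | m : {set 'I_n} in M] = M.

Definition arc_of e (M : {set {set 'I_n}}) (x y : 'I_n) := e x y /\ [set x; y] \in M.

Definition aut_arc_transitive_on e (M : {set {set 'I_n}}) :=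
  forall x y x' y', arc_of e M x y -> arc_of e M x' y' ->
    exists s, [/\ is_aut e s, s x = x' & s y = y'].

End Graphs.

(* Main.v *)
Require Import Defs.
From mathcomp Require Import all_boot all_order all_fingroup all_algebra zify ring lra.
Import Order.TTheory GRing.Theory Num.Theory.
Set Implicit Arguments. Unset Strict Implicit. Unset Printing Implicit Defensive.

Section Cyc.
Variables (n : nat) (e : rel 'I_n) (W : {set 'I_n}).
Hypothesis Hsym : symmetric e.
Hypothesis Hirr : irreflexive e.
Hypothesis H2 : two_regular_in e W.
Let r := induced_rel e W.
Let N y := [set t in W | e y t].

Lemma rN y t : r y t = (y \in W) && (t \in N y).
Proof. by rewrite /r /induced_rel /N inE. Qed.

Lemma N2 y a b : y \in W -> a \in N y -> b \in N y -> a != b -> N y = [set a; b].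
Proof.
move=> yW aN bN ab; apply/eqP; rewrite eq_sym eqEcard.
rewrite subUset !sub1set aN bN /= cards2 ab /N H2 //.
Qed.

Lemma N3 y a b c : y \in W -> a \in N y -> b \in N y -> c \in N y ->
  a != b -> a != c -> b != c -> False.
Proof.
move=> yW aN bN cN ab ac bc.
have := N2 yW aN bN ab; move/setP/(_ c); rewrite cN !inE.
by rewrite eq_sym (negbTE ac) eq_sym (negbTE bc).
Qed.

Lemma next_ne_prev (c : seq 'I_n) y : uniq c -> 2 < size c -> y \in c ->
  next c y != prev c y.
Proof.
move=> Uc Sc yc; apply/eqP => E.
have := next_prev Uc y; rewrite -E => E2.
case: (rot_to yc) => i s Ec.
have Uc' : uniq (rot i c) by rewrite rot_uniq.
have Sc' : size (rot i c) = size c by rewrite size_rot.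
move: E2; rewrite -!(next_rot i Uc).
rewrite Ec in Uc' Sc' *.
case: s Ec Uc' Sc' => [|b [|d s]] Ec Uc' Sc' /=.
- by rewrite -Sc' in Sc.
- by rewrite -Sc' in Sc.
move: Uc'; rewrite /= !inE => /andP[/norP[yb /norP[yd _]] /andP[/norP[bd _] _]].
rewrite eqxx /= eq_sym (negbTE yb) eqxx.
by move/eqP; rewrite eq_sym (negbTE yd).
Qed.
Lemma uniq_size (s : seq 'I_n) : uniq s -> size s <= n.
Proof. move/card_uniqP <-; rewrite -[X in _ <= X]card_ord; apply: max_card. Qed.

Lemma maxpath x : exists p, [/\ uniq (x::p), path r x p &
   forall t, r (last x p) t -> t \in x :: p].
Proof.
suff: forall k p, n - size (x::p) <= k -> uniq (x::p) -> path r x p ->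
  exists p', [/\ uniq (x::p'), path r x p' & forall t, r (last x p') t -> t \in x :: p'].
  by move=> /(_ n [::]); apply => //; rewrite leq_subr.
elim=> [|k IH] p Hk Up Pp.
- exists p; split=> // t rt; apply/negPn/negP => tn.
  have := uniq_size (s:=t :: x :: p); rewrite cons_uniq tn Up => /(_ isT).
  rewrite /= in Hk *; lia.
- case: (pickP (fun t => r (last x p) t && (t \notin x :: p))) => [t /andP[rt tn] | none].
  + apply: (IH (rcons p t)).
    * have := uniq_size (s:=t :: x :: p); rewrite cons_uniq tn Up => /(_ isT).
      rewrite /= size_rcons /= in Hk *; lia.
    * by rewrite -rcons_cons rcons_uniq tn Up.
    * by rewrite rcons_path Pp rt.
  + exists p; split=> // t rt; have := none t; rewrite /= rt /= => /negbFE; exact.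
Qed.

Lemma closecyc x : x \in W -> exists p, [/\ uniq (x::p), 2 < size (x :: p) & path.cycle r (x :: p)].
Proof.
move=> xW; have [p [Up Pp Mp]] := maxpath x.
case/lastP: p Up Pp Mp => [|q v] Up Pp Mp.
  have : N x != set0 by rewrite -card_gt0 /N H2.
  case/set0Pn => a aN; have := Mp a; rewrite /= rN xW aN inE => /(_ isT) /eqP ax.
  by move: aN; rewrite ax inE Hirr andbF.
move: Pp; rewrite rcons_path => /andP[Pq] => ruv.
move: ruv; rewrite rN => /andP[uW]; rewrite inE => /andP[vW euv].
have uN : last x q \in N v by rewrite inE uW Hsym.
have : N v :\ (last x q) != set0.
  by rewrite -card_gt0; have := cardsD1 (last x q) (N v); rewrite uN H2 // add1n => -[<-].
case/set0Pn => w; rewrite !inE => /andP[wu /andP[wW evw]].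
rewrite last_rcons in Mp.
have wx : w = x.
  apply/eqP/negPn/negP => wx.
  have : w \in x :: rcons q v by apply: Mp; rewrite rN vW inE wW evw.
  rewrite inE (negbTE wx) /= mem_rcons inE => /orP[/eqP wv|wq].
    by move: evw; rewrite wv Hirr.
  clear uW uN euv Mp; case/splitPr: wq Up wu Pq => q1 q2 Up wu Pq.
  case: q2 Up wu Pq => [|b q3] Up wu Pq.
    by move: wu; rewrite last_cat /= eqxx.
  move: Pq; rewrite cat_path /= => /and3P[_ raw /andP[rwb _]].
  move: Up; rewrite rcons_cat -cat_cons cat_uniq => /and3P[_ hh Ur].
  have aq := mem_last x q1; set a := last x q1 in aq raw.
  have ab : a != b.
    by apply/eqP => ab; move: hh; rewrite -ab /= inE aq orbT.
  have av : a != v.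
    by apply/eqP => av; move: hh; rewrite -av /= has_rcons /= aq !orbT.
  have bv : b != v.
    move: Ur => /= /andP[_ /andP[]]; rewrite mem_rcons inE.
    by case/norP.
  move: hh => _.
  move: raw rwb; rewrite !rN => /andP[aW]; rewrite inE => /andP[_ eaw] /andP[_ bN].
  apply: (@N3 w a b v) => //.
  - by rewrite inE aW Hsym.
  - by rewrite inE vW Hsym.
exists (rcons q v); split => //.
- rewrite /= size_rcons; case: q Up Pq wu {Mp uW uN euv} => [|q0 q] //= _ _.
  by rewrite wx eqxx.
- by rewrite /path.cycle !rcons_path Pq !last_rcons /= !rN uW vW !inE vW euv /= -wx wW evw.
Qed.
Lemma cyc_comp x : x \in W -> exists c : seq 'I_n,
  [/\ uniq c, 2 < size c, (forall y, (y \in c) = connect r x y) &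
   {in c &, forall y z, e y z = (z == next c y) || (y == next c z)}].
Proof.
move=> xW; have [p [Up Sp Cp]] := closecyc xW.
set c := x :: p; exists c.
have Nc : forall y, y \in c -> y \in W /\ N y = [set next c y; prev c y].
  move=> y yc; have := next_cycle Cp yc; rewrite rN => /andP[yW nN].
  have := prev_cycle Cp yc; rewrite rN => /andP[pW]; rewrite inE => /andP[_ epy].
  split => //; apply: N2 => //; first by rewrite inE pW Hsym.
  exact: next_ne_prev.
have cl : forall y t, y \in c -> r y t -> t \in c.
  move=> y t yc; have [yW Ny] := Nc y yc; rewrite rN Ny in_set2 => /andP[_ /orP[]] /eqP ->.
    by rewrite mem_next.
  by rewrite mem_prev.
split => //.
- move=> y; apply/idP/idP.
    have : path r x p by move: Cp; rewrite /path.cycle rcons_path => /andP[].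
    by move/path_connect; apply.
  case/connectP => q Pq ->.
  have : x \in c by rewrite inE eqxx.
  elim: q (x) Pq => [|a q IH] x0 //= /andP[ra Pq] x0c.
  by apply: IH => //; apply: cl ra.
- move=> y t yc tc; apply/idP/idP.
    move=> eyt; have [yW Ny] := Nc y yc; have [tW _] := Nc t tc.
    have : t \in N y by rewrite inE tW eyt.
    rewrite Ny in_set2 => /orP[->//|/eqP ->].
    by rewrite next_prev // eqxx orbT.
  case/orP => /eqP ->.
    by have := next_cycle Cp yc; rewrite /r /induced_rel => /and3P[].
  by have := next_cycle Cp tc; rewrite /r /induced_rel Hsym => /and3P[].
Qed.
End Cyc.
Local Open Scope ring_scope.
Section Spec.
Variables (R : realFieldType) (n : nat) (e : rel 'I_n).
Hypothesis Hsym : symmetric e.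
Hypothesis Hcubic : cubic e.
Let A := adjmx R e.

Definition cnt j (S : {set 'I_n}) := #|[set y in S | e j y]|.

Lemma cnt_split j S : (cnt j S + cnt j (~: S) = 3)%N.
Proof.
rewrite -(Hcubic j) -(cardsID S [set y | e j y]) /cnt.
have -> : [set y in S | e j y] = [set y | e j y] :&: S by apply/setP => y; rewrite !inE andbC.
have -> : [set y in ~: S | e j y] = [set y | e j y] :\: S by apply/setP => y; rewrite !inE andbC.
by [].
Qed.

Lemma mulA_sign (v : 'rV[R]_n) (S : {set 'I_n}) : (forall i, v 0 i = if i \in S then 1 else -1) ->
  forall j, (v *m A) 0 j = (cnt j S)%:R - (cnt j (~:S))%:R.
Proof.
move=> Hv j; rewrite !mxE.
rewrite (eq_bigr (fun i => if e j i then v 0 i else 0)); last first.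
  by move=> i _; rewrite !mxE Hsym; case: (e j i); rewrite ?mulr1 ?mulr0.
rewrite -big_mkcond (bigID (fun i => i \in S)) /=.
rewrite (eq_bigr (fun _ => 1)); last by move=> i /andP[_ H]; rewrite Hv H.
rewrite [X in _ + X](eq_bigr (fun _ => -1)); last by move=> i /andP[_ /negbTE H]; rewrite Hv H.
rewrite sumrN; congr (_ - _).
  rewrite (eq_bigl (fun i => i \in [set y in S | e j y])) ?sumr_const //.
  by move=> i; rewrite !inE andbC.
rewrite (eq_bigl (fun i => i \in [set y in ~: S | e j y])) ?sumr_const //.
by move=> i; rewrite !inE andbC.
Qed.

Lemma eig_cnt (v : 'rV[R]_n) (S : {set 'I_n}) : (forall i, v 0 i = if i \in S then 1 else -1) ->
  v *m A = v -> forall j, cnt j S = if j \in S then 2%N else 1%N.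
Proof.
move=> Hv Hvv j; have := mulA_sign Hv j; rewrite Hvv Hv.
have := cnt_split j S.
case: (j \in S) => Hs.
  move/eqP; rewrite eq_sym subr_eq -(natrD R 1%N) eqr_nat => /eqP; lia.
move/eqP; rewrite eq_sym subr_eq addrC eq_sym subr_eq -(natrD R _ 1%N) eqr_nat => /eqP; lia.
Qed.

Lemma cnt_eig (v : 'rV[R]_n) (S : {set 'I_n}) : (forall i, v 0 i = if i \in S then 1 else -1) ->
  (forall j, cnt j S = if j \in S then 2%N else 1%N) -> v *m A = v.
Proof.
move=> Hv Hc; apply/rowP => j; rewrite (mulA_sign Hv) Hv.
have := cnt_split j S; rewrite Hc.
case: (j \in S) => H.
  have -> : cnt j (~: S) = 1%N by lia.
  by rewrite -[2%N]/(1 + 1)%N natrD addrK.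
have -> : cnt j (~: S) = 2%N by lia.
by rewrite -[2%N]/(1 + 1)%N natrD opprD addrA subrr add0r.
Qed.

Lemma eig_line (Hrank : \rank (eigenspace A 1) = 1%N) (z : 'rV[R]_n)
  (Hz : z *m A = z) (Hz0 : z != 0) (u : 'rV[R]_n) (Hu : u *m A = u) :
  exists c, u = c *: z.
Proof.
have zE : (z <= eigenspace A 1)%MS by apply/eigenspaceP; rewrite scale1r.
have uE : (u <= eigenspace A 1)%MS by apply/eigenspaceP; rewrite scale1r.
have : (z == eigenspace A 1)%MS.
  by rewrite -(mxrank_leqif_eq zE).2 rank_rV Hz0 Hrank.
case/andP => _ Ez.
by apply/sub_rVP; apply: submx_trans uE Ez.
Qed.

End Spec.
Section Main.
Variables (R : realFieldType) (n : nat) (e : rel 'I_n).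
Hypothesis Hsimple : simple_graph e.
Hypothesis Hcubic : cubic e.
Hypothesis Hvt : vertex_transitive e.
Hypothesis Hsimple1 : \rank (eigenspace (adjmx R e) 1) = 1%N.
Variable z : 'rV[R]_n.
Hypothesis Hz : z *m adjmx R e = z.
Hypothesis Hpm : forall x, z 0 x = 1 \/ z 0 x = -1.

Local Notation Vp := [set x | z 0 x == 1].
Local Notation Vm := [set x | z 0 x == -1].

Lemma Hsym : symmetric e. Proof. by case: Hsimple. Qed.
Lemma Hirr : irreflexive e. Proof. by case: Hsimple. Qed.

Lemma one_neq : (1 : R) != -1.
Proof. by apply/eqP => H; lra. Qed.

Lemma VmC : Vm = ~: Vp.
Proof.
apply/setP => y; rewrite !inE; case: (Hpm y) => ->; rewrite eqxx //.
  by rewrite (negbTE one_neq).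
by rewrite eq_sym (negbTE one_neq).
Qed.

Lemma zsign i : z 0 i = if i \in Vp then 1 else -1.
Proof.
rewrite inE; case: (Hpm i) => ->; rewrite ?eqxx //.
by rewrite eq_sym (negbTE one_neq).
Qed.


Lemma cntVp j : cnt e j Vp = if j \in Vp then 2%N else 1%N.
Proof. exact: (eig_cnt Hsym Hcubic zsign Hz). Qed.

Lemma cntVm j : cnt e j (~: Vp) = if j \in Vp then 1%N else 2%N.
Proof. have := cnt_split Hcubic j Vp; rewrite cntVp; case: (j \in Vp) => H; apply/eqP; [rewrite -(eqn_add2l 2) H | rewrite -(eqn_add2l 1) H]; done. Qed.

Lemma npos : (0 < n)%N.
Proof. by have := rank_leq_row (eigenspace (adjmx R e) 1); rewrite Hsimple1. Qed.

Definition x0 : 'I_n := Ordinal npos.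

Lemma znz : z != 0.
Proof.
apply/eqP => z0; have := Hpm x0; rewrite z0 mxE => -[/eqP|/eqP].
  by rewrite eq_sym oner_eq0.
by rewrite eq_sym oppr_eq0 oner_eq0.
Qed.

Lemma c_pm (u : 'rV[R]_n) c : (forall j, u 0 j = 1 \/ u 0 j = -1) ->
  u = c *: z -> c = 1 \/ c = -1.
Proof.
move=> Hu Ec; have := Hu x0; rewrite Ec mxE.
case: (Hpm x0) => ->; rewrite ?mulr1 ?mulrN1; first by [].
by case => H; [right|left]; rewrite -[c]opprK H ?opprK.
Qed.

Definition pres (s : {perm 'I_n}) := forall j, (s j \in Vp) = (j \in Vp).
Definition swap (s : {perm 'I_n}) := forall j, (s j \in Vp) = (j \notin Vp).

Lemma aut_dich s : is_aut e s -> pres s \/ swap s.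
Proof.
move=> Hs.
pose u := \row_j z 0 (s j).
have Hu : u *m adjmx R e = u.
  apply/rowP => j; rewrite !mxE.
  have -> : \sum_i u 0 i * adjmx R e i j = \sum_i z 0 (s i) * (e (s i) (s j))%:R.
    by apply: eq_bigr => i _; rewrite !mxE Hs.
  have -> : \sum_i z 0 (s i) * (e (s i) (s j))%:R = \sum_i z 0 i * (e i (s j))%:R.
    by rewrite [RHS](reindex_inj (@perm_inj _ s)).
  have := congr1 (fun M : 'rV[R]_n => M 0 (s j)) Hz; rewrite /= !mxE => <-.
  by apply: eq_bigr => i _; rewrite !mxE.
have [c Hc] := eig_line Hsimple1 Hz znz Hu.
have : c = 1 \/ c = -1 by apply: (c_pm (u := u)) => // j; rewrite mxE.
have Hj : forall j, z 0 (s j) = c * z 0 j.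
  by move=> j; have := congr1 (fun M : 'rV[R]_n => M 0 j) Hc; rewrite !mxE.
case=> Ec; [left|right] => j; rewrite !inE Hj Ec.
  by rewrite mul1r.
by rewrite mulN1r eqr_oppLR; case: (Hpm j) => ->; rewrite ?eqxx ?(negbTE one_neq) // eq_sym (negbTE one_neq).
Qed.

Lemma mem_imset_perm (s : {perm 'I_n}) (S : {set 'I_n}) y : (y \in s @: S) = ((s^-1)%g y \in S).
Proof.
apply/imsetP/idP => [[x xS ->]|H]; first by rewrite permK.
by exists ((s^-1)%g y); rewrite ?permKV.
Qed.

Lemma pres_img s : pres s -> s @: Vp = Vp /\ s @: (~: Vp) = ~: Vp.
Proof.
move=> Hp; split; apply/setP => y; rewrite mem_imset_perm ?in_setC -Hp permKV //.
Qed.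

Lemma swap_img s : swap s -> s @: Vp = ~: Vp /\ s @: (~: Vp) = Vp.
Proof.
move=> Hp; split; apply/setP => y; rewrite mem_imset_perm ?in_setC.
  by rewrite -[in RHS](permKV s y) Hp negbK.
by rewrite -[in RHS](permKV s y) Hp.
Qed.

Lemma aut_inv s : is_aut e s -> is_aut e (s^-1)%g.
Proof. by move=> Hs x y; rewrite -Hs !permKV. Qed.


Lemma VmE b : (z 0 b == -1) = (b \notin Vp).
Proof. by have := congr1 (fun S : {set 'I_n} => b \in S) VmC; rewrite /= inE in_setC => ->. Qed.

Lemma exVp : exists xp, xp \in Vp.
Proof.
have : (0 < cnt e x0 Vp)%N by rewrite cntVp; case: ifP.
by rewrite card_gt0 => /set0Pn [y]; rewrite inE => /andP[yp _]; exists y.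
Qed.

Lemma exVm : exists xm, xm \notin Vp.
Proof.
have : (0 < cnt e x0 (~: Vp))%N by rewrite cntVm; case: ifP.
by rewrite card_gt0 => /set0Pn [y]; rewrite inE in_setC => /andP[yp _]; exists y.
Qed.

Lemma two_reg_Vp : two_regular_in e Vp.
Proof. by move=> x xV; have := cntVp x; rewrite xV. Qed.

Lemma two_reg_Vm : two_regular_in e Vm.
Proof. by rewrite VmC => x xV; have := cntVm x; rewrite in_setC in xV; rewrite (negbTE xV). Qed.

Local Notation r := (induced_rel e Vp).

Lemma comp_le s a : is_aut e s -> pres s ->
  (#|[set y | connect r a y]| <= #|[set y | connect r (s a) y]|)%N.
Proof.
move=> Hs Hp.
have Hr : forall u v, r (s u) (s v) = r u v by move=> u v; rewrite /induced_rel !Hp Hs.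
rewrite -(card_imset _ (@perm_inj _ s)); apply: subset_leq_card.
apply/subsetP => y /imsetP[x]; rewrite inE => /connectP[p Pp ->] ->.
rewrite inE; apply/connectP; exists (map s p); last by rewrite last_map.
by rewrite path_map (@eq_path _ _ r) // => u v; exact: Hr.
Qed.

Lemma item1 : union_of_equal_cycles e Vp.
Proof.
have [xp xpV] := exVp.
exists #|[set y | connect r xp y]|.
have Hk : forall x, x \in Vp -> #|[set y | connect r x y]| = #|[set y | connect r xp y]|.
  move=> x xV; have [s [Hs sx]] := Hvt xp x; have [s' [Hs' sx']] := Hvt x xp.
  have Hp : pres s.
    by case: (aut_dich Hs) => // Hsw; move: (Hsw xp); rewrite sx xV xpV.
  have Hp' : pres s'.
    by case: (aut_dich Hs') => // Hsw; move: (Hsw x); rewrite sx' xV xpV.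
  apply/eqP; rewrite eqn_leq; have := comp_le x Hs' Hp'; rewrite sx' => ->.
  by have := comp_le xp Hs Hp; rewrite sx => ->.
have [c [Uc Sc Mc Ac]] := cyc_comp Hsym Hirr two_reg_Vp xpV.
split.
  have -> : #|[set y | connect r xp y]| = size c.
    by rewrite -(card_uniqP Uc); apply: eq_card => y; rewrite inE Mc.
  exact: Sc.
move=> x xV; have [d [Ud Sd Md Ad]] := cyc_comp Hsym Hirr two_reg_Vp xV.
exists d; split => //.
by rewrite -(Hk x xV) -(card_uniqP Ud); apply: eq_card => y; rewrite inE Md.
Qed.

Lemma item2 : induced_iso e Vp Vm /\ aut_block e Vp /\ aut_block e Vm.
Proof.
have [xp xpV] := exVp; have [xm xmV] := exVm.
have [s [Hs sx]] := Hvt xp xm.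
have Hsw : swap s.
  by case: (aut_dich Hs) => // Hp; move: (Hp xp); rewrite sx xpV (negbTE xmV).
split; [|split].
- exists s; split.
  + by move=> a b _ _; apply: perm_inj.
  + by rewrite VmC; exact: (swap_img Hsw).1.
  + by move=> a b _ _; apply: Hs.
- move=> t Ht; case: (aut_dich Ht) => H; [left; exact: (pres_img H).1 | right].
  by rewrite (swap_img H).1 -setI_eq0 setIC setICr.
- rewrite VmC => t Ht; case: (aut_dich Ht) => H; [left; exact: (pres_img H).2 | right].
  by rewrite (swap_img H).2 -setI_eq0 setICr.
Qed.

Lemma item3 (P Q : {set 'I_n}) :
  P :|: Q = setT -> P :&: Q = set0 -> P != set0 -> Q != set0 ->
  two_regular_in e P -> two_regular_in e Q -> [set P; Q] = [set Vp; Vm].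
Proof.
move=> PU PI _ _ HP HQ.
have QC : Q = ~: P.
  apply/setP => y; rewrite in_setC.
  have := congr1 (fun S : {set 'I_n} => y \in S) PU; have := congr1 (fun S : {set 'I_n} => y \in S) PI.
  by rewrite /= !inE; case: (y \in P); case: (y \in Q).
pose w := \row_j (if j \in P then (1:R) else -1).
have Hw : forall i, w 0 i = if i \in P then 1 else -1 by move=> i; rewrite mxE.
have Hc : forall j, cnt e j P = if j \in P then 2%N else 1%N.
  move=> j; case: ifP => jP; first exact: HP.
  have jQ : j \in Q by rewrite QC in_setC jP.
  have := HQ j jQ; have := cnt_split Hcubic j P; rewrite -QC /cnt => H1 H2.
  by rewrite H2 in H1; apply/eqP; rewrite -(eqn_add2r 2) H1.
have Hwe := cnt_eig Hsym Hcubic Hw Hc.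
have [c Ec] := eig_line Hsimple1 Hz znz Hwe.
have Pw : P = [set j | w 0 j == 1].
  apply/setP => j; rewrite inE Hw; case: (j \in P); rewrite ?eqxx //.
  by rewrite eq_sym (negbTE one_neq).
have : c = 1 \/ c = -1.
  by apply: (c_pm (u := w)) => // j; rewrite Hw; case: ifP; [left|right].
case => Ecc.
  have PV : P = Vp by rewrite Pw Ec; apply/setP => j; rewrite !inE mxE Ecc mul1r.
  by rewrite QC PV VmC.
have PV : P = Vm by rewrite Pw Ec; apply/setP => j; rewrite !inE mxE Ecc mulN1r eqr_oppLR.
by rewrite QC PV VmC setCK setUC.
Qed.


Local Notation M := [set [set x; y] | x in Vp, y in Vm & e x y].

Lemma inM m : m \in M -> exists a b, [/\ a \in Vp, b \notin Vp, e a b & m = [set a; b]].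
Proof.
case/imset2P => a b aV; rewrite !inE => /andP[bV eab] ->.
by exists a, b; split => //; rewrite -VmE.
Qed.

Lemma Min a b : a \in Vp -> b \notin Vp -> e a b -> [set a; b] \in M.
Proof. by move=> aV bV eab; apply: imset2_f => //; rewrite !inE VmE bV. Qed.

Lemma item4 : perfect_matching e M.
Proof.
split.
  by move=> m /inM [a [b [_ _ eab ->]]]; exists a, b.
move=> x; apply/eqP/cards1P.
case xV: (x \in Vp).
- have := cntVm x; rewrite xV => /eqP/cards1P [y0 Hy0].
  have : y0 \in [set y in ~: Vp | e x y] by rewrite Hy0 set11.
  rewrite in_set in_setC => /andP[y0V exy0].
  exists [set x; y0]; apply/setP => m; rewrite in_set1 in_set.
  apply/andP/eqP => [[mM xm]|->]; last by rewrite (Min xV y0V exy0) set21.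
  have [a [b [aV bV eab Em]]] := inM mM; subst m.
  move: xm; rewrite in_set2 => /orP[/eqP xa|/eqP xb]; last by move: bV; rewrite -xb xV.
  subst a; have : b \in [set y in ~: Vp | e x y] by rewrite in_set in_setC bV eab.
  by rewrite Hy0 in_set1 => /eqP ->.
- have := cntVp x; rewrite xV => /eqP/cards1P [y0 Hy0].
  have : y0 \in [set y in Vp | e x y] by rewrite Hy0 set11.
  rewrite in_set => /andP[y0V exy0].
  exists [set y0; x]; apply/setP => m; rewrite in_set1 in_set.
  apply/andP/eqP => [[mM xm]|->]; last by rewrite (Min y0V (negbT xV)) ?set22 // Hsym.
  have [a [b [aV bV eab Em]]] := inM mM; subst m.
  move: xm; rewrite in_set2 => /orP[/eqP xa|/eqP xb]; first by move: aV; rewrite -xa xV.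
  subst b; have : a \in [set y in Vp | e x y] by rewrite in_set aV Hsym eab.
  by rewrite Hy0 in_set1 => /eqP ->.
Qed.

Lemma item5a : aut_fixes_edgeset e M.
Proof.
move=> s Hs; apply/eqP; rewrite eqEcard card_imset; last exact: imset_inj (@perm_inj _ s).
rewrite leqnn andbT; apply/subsetP => m' /imsetP [m mM ->].
have [a [b [aV bV eab ->]]] := inM mM.
rewrite imsetU1 imset_set1; case: (aut_dich Hs) => H.
  by apply: Min; rewrite ?H ?Hs.
by rewrite setUC; apply: Min; rewrite ?H ?negbK ?Hs 1?Hsym.
Qed.

Lemma arc_opp x y : arc_of e M x y -> (y \in Vp) = (x \notin Vp).
Proof.
case => exy /inM [a [b [aV bV eab E]]].
have xab : x \in [set a; b] by rewrite -E set21.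
have yab : y \in [set a; b] by rewrite -E set22.
move: xab yab; rewrite !in_set2 => /orP[/eqP xa|/eqP xb] /orP[/eqP ya|/eqP yb].
- by move: exy; rewrite xa ya Hirr.
- by rewrite xa yb aV (negbTE bV).
- by rewrite xb ya aV (negbTE bV).
- by move: exy; rewrite xb yb Hirr.
Qed.

Lemma opp_uniq x a b : e x a -> e x b -> (a \in Vp) = (x \notin Vp) ->
  (b \in Vp) = (x \notin Vp) -> a = b.
Proof.
case xV: (x \in Vp) => /= ea eb Ha Hb.
  have := cntVm x; rewrite xV => /eqP/cards1P [y0 Hy0].
  have : a \in [set y in ~: Vp | e x y] by rewrite in_set ?in_setC Ha ea.
  have : b \in [set y in ~: Vp | e x y] by rewrite in_set ?in_setC Hb eb.
  by rewrite Hy0 !in_set1 => /eqP -> /eqP ->.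
have := cntVp x; rewrite xV => /eqP/cards1P [y0 Hy0].
have : a \in [set y in Vp | e x y] by rewrite in_set ?in_setC Ha ea.
have : b \in [set y in Vp | e x y] by rewrite in_set ?in_setC Hb eb.
by rewrite Hy0 !in_set1 => /eqP -> /eqP ->.
Qed.

Lemma item5b : aut_arc_transitive_on e M.
Proof.
move=> x y x' y' Hxy Hx'y'; have [s [Hs sx]] := Hvt x x'.
exists s; split => //.
apply: (opp_uniq (x := x')).
- by rewrite -sx Hs; case: Hxy.
- by case: Hx'y'.
- by have := arc_opp Hxy; case: (aut_dich Hs) => H; rewrite -sx !H => ->.
- exact: arc_opp Hx'y'.
Qed.

End Main.


Unset Implicit Arguments.
Theorem lemma4p1 (R : realFieldType) (n : nat) (e : rel 'I_n)
  (Hsimple : simple_graph e) (Hcubic : cubic e) (Hvt : vertex_transitive e)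
  (Hsimple1 : \rank (eigenspace (adjmx R e) 1) = 1%N)
  (z : 'rV[R]_n) (Hz : z *m adjmx R e = z)
  (Hpm : forall x, z 0 x = 1 \/ z 0 x = -1) :
  let Vp := [set x | z 0 x == 1] in
  let Vm := [set x | z 0 x == -1] in
  let M := [set [set x; y] | x in Vp, y in Vm & e x y] in
  [/\ union_of_equal_cycles e Vp,
      induced_iso e Vp Vm /\ aut_block e Vp /\ aut_block e Vm,
      (two_regular_in e Vp /\ two_regular_in e Vm) /\
        (forall P Q : {set 'I_n},
           P :|: Q = setT -> P :&: Q = set0 -> P != set0 -> Q != set0 ->
           two_regular_in e P -> two_regular_in e Q ->
           [set P; Q] = [set Vp; Vm]),
      perfect_matching e M &
      aut_fixes_edgeset e M /\ aut_arc_transitive_on e M].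
Proof.
move=> Vp Vm M; rewrite /M /Vm /Vp; split.
- by apply: item1.
- by apply: item2.
- split; first split.
  + by apply: two_reg_Vp.
  + by apply: two_reg_Vm.
  + by apply: item3.
- by apply: item4.
- split.
  + by apply: item5a.
  + by apply: item5b.
Qed.
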